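(* Let $\psi$ be a reduced function. Then $w_\psi$ is periodic if and only if $\psi(n)=n-1$ for every sufficiently large integer $n$.
   Context: $\mathcal{A}$ is an alphabet disjoint from $\mathbb{N}^*=\{1,2,\dots\}$. A function is a map $\psi:\mathbb{N}^*\to\mathbb{N}^*\sqcup\mathcal{A}$ such that for every $n\ge1$ either $\psi(n)\in\mathcal{A}$ or $1\le\psi(n)\le n-1$. Associated words: $\pi_1=\varepsilon$ and, for $i\ge1$: if $\psi(i)\in\mathcal{A}$, $\pi_{i+1}=\pi_i\psi(i)\pi_i$; if $\psi(i)\in\mathbb{N}^*$, writing $\pi_i=\pi_{\psi(i)}b_i$ (where $\pi_{\psi(i)}$ is a prefix of $\pi_i$), $\pi_{i+1}=\pi_ib_i$. Each $\pi_i$ is a proper prefix of $\pi_{i+1}$, and $w_\psi$ is the infinite word having all $\pi_i$ as prefixes. Let $(t_k)_{k\ge0}$ be the (finite or infinite) family, in increasing order, of all $n\ge1$ with $\psi(n)\in\mathcal{A}$ or $1\le\psi(n)\le n-2$. $\psi$ is reduced if for every $k\ge1$ such that $t_k$ exists: $\psi(t_k)\ne\psi(t_{k-1})$, and either $\psi(t_k)\in\mathcal{A}$ or $\psi(t_k)<t_{k-1}$. *)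

(* Defs.v *)
From mathcomp Require Import all_boot.
Set Implicit Arguments. Unset Strict Implicit. Unset Printing Implicit Defensive.

(* A "function" psi : N* -> N* ⊔ A is modelled as psi : nat -> nat + A;
   the value at 0 is irrelevant.  Letters are [inr a], integers [inl m]. *)
Definition is_function (A : Type) (psi : nat -> nat + A) : Prop :=
  forall n, 1 <= n ->
    match psi n with
    | inl m => 1 <= m <= n - 1
    | inr _ => true
    end.

(* pis psi n = [:: pi_1; pi_2; ...; pi_(n+1)] *)
Fixpoint pis (A : Type) (psi : nat -> nat + A) (n : nat) : seq (seq A) :=
  match n with
  | 0 => [:: [::]]
  | i.+1 =>
      let l := pis psi i in
      let p := last [::] l in
      let next :=
        match psi i.+1 with
        | inr a => p ++ a :: p
        | inl m => p ++ drop (size (nth [::] l m.-1)) p   (* pi_m = nth l (m-1) *)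
        end in
      rcons l next
  end.

(* pi_word psi i = pi_i for i >= 1 (and pi_word psi 0 = [::], irrelevant). *)
Definition pi_word (A : Type) (psi : nat -> nat + A) (i : nat) : seq A :=
  last [::] (pis psi i.-1).

(* The infinite word w_psi, indexed from 0: its k-th letter is the k-th letter
   of pi_(k+2), which has length >= k+1 (each pi_i is a proper prefix of
   pi_(i+1) and pi_1 is empty).  We use option to avoid needing an inhabitant
   of A; for a valid psi every value is [Some _]. *)
Definition w_psi (A : Type) (psi : nat -> nat + A) (k : nat) : option A :=
  nth None (map Some (pi_word psi k.+2)) k.

Definition periodic (A : Type) (w : nat -> A) : Prop :=
  exists p, 0 < p /\ forall k, w (k + p) = w k.

(* n belongs to the family (t_k): psi(n) in A or 1 <= psi(n) <= n-2 *)
Definition is_t (A : Type) (psi : nat -> nat + A) (n : nat) : Prop :=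
  1 <= n /\
  match psi n with
  | inl m => 1 <= m <= n - 2
  | inr _ => true
  end.

(* reduced: for any two consecutive members t_(k-1) = m < n = t_k of the family *)
Definition reduced (A : Type) (psi : nat -> nat + A) : Prop :=
  forall m n, m < n -> is_t psi m -> is_t psi n ->
    (forall j, m < j < n -> ~ is_t psi j) ->
    psi n <> psi m /\
    match psi n with
    | inl q => q < m
    | inr _ => true
    end.

(* Main.v *)
Require Import Defs.
From mathcomp Require Import all_boot zify.
From Stdlib Require Import Classical.
Set Implicit Arguments. Unset Strict Implicit. Unset Printing Implicit Defensive.
Set Warnings "-notation-overridden".

Lemma pis_size A (psi : nat -> nat + A) n : size (pis psi n) = n.+1.
Proof. elim: n => [//|n IH] /=. by rewrite size_rcons IH. Qed.

Lemma nth_pis A (psi : nat -> nat + A) n k :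
  k <= n -> nth [::] (pis psi n) k = pi_word psi k.+1.
Proof.
elim: n k => [|n IH] k hk.
  by have -> : k = 0 by lia.
rewrite /= nth_rcons pis_size.
case: (ltnP k n.+1) => h; first by rewrite IH //; lia.
have -> : k = n.+1 by lia.
rewrite eqxx /pi_word /= last_rcons //.
Qed.

Definition bword A (psi : nat -> nat + A) n : seq A :=
  match psi n with
  | inr a => a :: pi_word psi n
  | inl m => drop (size (pi_word psi m)) (pi_word psi n)
  end.

Lemma P_succ A (psi : nat -> nat + A) n : is_function psi -> 1 <= n ->
  pi_word psi n.+1 = pi_word psi n ++ bword psi n.
Proof.
move=> Hf hn; have := Hf n hn.
case: n hn => [//|n] _.
rewrite /bword /pi_word /= last_rcons.
case: (psi n.+1) => [m hm|a _] //.
rewrite nth_pis; last by lia.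
by have -> : m.-1.+1 = m by lia.
Qed.

Definition L A (psi : nat -> nat + A) n := size (pi_word psi n).
Definition Wn A (psi : nat -> nat + A) n k := nth None (map Some (pi_word psi n)) k.

Lemma L1 A (psi : nat -> nat + A) : L psi 1 = 0.
Proof. by []. Qed.

Lemma Lsucc A (psi : nat -> nat + A) n : is_function psi -> 1 <= n ->
  L psi n.+1 = L psi n + size (bword psi n).
Proof. move=> Hf hn; by rewrite /L (P_succ Hf hn) size_cat. Qed.

Lemma Lmono_aux A (psi : nat -> nat + A) : is_function psi ->
  forall n a b, 1 <= a -> a < b -> b <= n -> L psi a < L psi b.
Proof.
move=> Hf; elim=> [|n IH] a b ha hab hb; first lia.
case: (ltnP b n.+1) => hb'; first by apply: IH => //; lia.
have eb : b = n.+1 by lia. subst b.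
have hn : 1 <= n by lia.
have hpos : 0 < size (bword psi n).
  rewrite /bword; have := Hf n hn; case: (psi n) => [m hm|x _] //.
  rewrite size_drop; have := IH m n; rewrite /L; lia.
rewrite (Lsucc Hf hn).
case: (ltnP a n) => h; first by have := IH a n; lia.
have -> : a = n by lia. lia.
Qed.

Lemma Lmono A (psi : nat -> nat + A) a b : is_function psi ->
  1 <= a -> a < b -> L psi a < L psi b.
Proof. move=> Hf ha hab; exact: (Lmono_aux Hf (n:=b)). Qed.

Lemma Lle A (psi : nat -> nat + A) a b : is_function psi ->
  1 <= a -> a <= b -> L psi a <= L psi b.
Proof.
move=> Hf ha hab; case: (ltnP a b) => h; first by have := Lmono Hf ha h; lia.
have -> : a = b by lia. by [].
Qed.

Lemma Lge A (psi : nat -> nat + A) n : is_function psi -> 1 <= n -> n.-1 <= L psi n.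
Proof.
move=> Hf; elim: n => [//|n IH] _.
case: n IH => [|n] IH; first by [].
have := IH erefl; have := Lmono Hf (a:=n.+1) (b:=n.+2) erefl (ltnSn _). lia.
Qed.

Lemma Wn_succ A (psi : nat -> nat + A) n k : is_function psi -> 1 <= n ->
  k < L psi n -> Wn psi n.+1 k = Wn psi n k.
Proof.
move=> Hf hn hk; rewrite /Wn (P_succ Hf hn) map_cat nth_cat size_map.
by have -> : k < size (pi_word psi n) by [].
Qed.

Lemma Wn_le A (psi : nat -> nat + A) n n' k : is_function psi -> 1 <= n ->
  n <= n' -> k < L psi n -> Wn psi n' k = Wn psi n k.
Proof.
move=> Hf hn; elim: n' => [|n' IH] hn' hk; first lia.
case: (ltnP n n'.+1) => h.
  rewrite Wn_succ //; first (apply: IH => //; lia). lia.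
  have := Lle Hf hn (b:=n') ltac:(lia); lia.
by have -> : n = n'.+1 by lia.
Qed.

Lemma W_Wn A (psi : nat -> nat + A) n k : is_function psi -> 1 <= n ->
  k < L psi n -> w_psi psi k = Wn psi n k.
Proof.
move=> Hf hn hk.
have h2 : k < L psi k.+2 by have := Lge Hf (n:=k.+2) erefl; have := Lmono Hf (a:=k.+1) (b:=k.+2) erefl (ltnSn _); have := Lge Hf (n:=k.+1) erefl; lia.
rewrite /w_psi -/(Wn psi k.+2 k).
case: (leqP n k.+2) => h.
  exact: (Wn_le Hf hn h hk).
by rewrite (Wn_le Hf (n:=k.+2) erefl (ltnW h) h2).
Qed.

Lemma L_let A (psi : nat -> nat + A) n a : is_function psi -> 1 <= n ->
  psi n = inr a -> L psi n.+1 = L psi n + L psi n + 1.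
Proof. move=> Hf hn h; rewrite (Lsucc Hf hn) /bword h /= /L; lia. Qed.

Lemma L_inl A (psi : nat -> nat + A) n q : is_function psi -> 1 <= n ->
  psi n = inl q -> L psi n.+1 = L psi n + (L psi n - L psi q).
Proof. move=> Hf hn h; rewrite (Lsucc Hf hn) /bword h size_drop //. Qed.

Lemma psi_inl A (psi : nat -> nat + A) n q : is_function psi -> 1 <= n ->
  psi n = inl q -> 1 <= q <= n - 1.
Proof. move=> Hf hn h; have := Hf n hn; by rewrite h. Qed.

Lemma W_let A (psi : nat -> nat + A) n a : is_function psi -> 1 <= n ->
  psi n = inr a -> w_psi psi (L psi n) = Some a /\
  forall k, k < L psi n -> w_psi psi (L psi n + 1 + k) = w_psi psi k.
Proof.
move=> Hf hn h; have hL := L_let Hf hn h.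
split.
  rewrite (W_Wn Hf (n:=n.+1)) //; last (rewrite hL; lia).
  rewrite /Wn (P_succ Hf hn) /bword h map_cat nth_cat size_map /L ltnn subnn //.
move=> k hk.
rewrite (W_Wn Hf (n:=n.+1)) //; last lia.
rewrite (W_Wn Hf (n:=n)) //.
rewrite /Wn (P_succ Hf hn) /bword h map_cat nth_cat size_map /L.
have -> : (size (pi_word psi n) + 1 + k < size (pi_word psi n)) = false by lia.
have -> : size (pi_word psi n) + 1 + k - size (pi_word psi n) = k.+1 by lia.
by [].
Qed.

Lemma W_copy A (psi : nat -> nat + A) n q : is_function psi -> 1 <= n ->
  psi n = inl q -> forall e, e < L psi n - L psi q ->
  w_psi psi (L psi n + e) = w_psi psi (L psi q + e).
Proof.
move=> Hf hn h e he; have hL := L_inl Hf hn h.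
rewrite (W_Wn Hf (n:=n.+1)) //; last lia.
rewrite (W_Wn Hf (n:=n)) //; last lia.
rewrite /Wn (P_succ Hf hn) /bword h map_cat nth_cat size_map /L.
have -> : (size (pi_word psi n) + e < size (pi_word psi n)) = false by lia.
have -> : size (pi_word psi n) + e - size (pi_word psi n) = e by lia.
by rewrite map_drop nth_drop.
Qed.

Definition Border A (psi : nat -> nat + A) j n :=
  forall k, k < L psi j -> w_psi psi (L psi n - L psi j + k) = w_psi psi k.

Lemma BF_of A (psi : nat -> nat + A) n : is_function psi -> 1 <= n ->
  (forall j, 1 <= j <= n -> Border psi j n) ->
  forall k, k < L psi n -> w_psi psi (L psi n.+1 - L psi n + k) = w_psi psi k.
Proof.
move=> Hf hn HB k hk.
case e: (psi n) => [q|a].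
  have hq := psi_inl Hf hn e.
  have hLq := Lmono Hf (a:=q) (b:=n) ltac:(lia) ltac:(lia).
  rewrite (L_inl Hf hn e).
  case: (ltnP k (L psi q)) => hk'.
    have := HB q ltac:(lia) k hk'. by have -> : L psi n + (L psi n - L psi q) - L psi n + k = L psi n - L psi q + k by lia.
  have -> : L psi n + (L psi n - L psi q) - L psi n + k = L psi n + (k - L psi q) by lia.
  rewrite (W_copy Hf hn e); last lia.
  by have -> : L psi q + (k - L psi q) = k by lia.
have [_ H2] := W_let Hf hn e.
rewrite (L_let Hf hn e) -(H2 k hk). f_equal. lia.
Qed.

Lemma Border_all A (psi : nat -> nat + A) n : is_function psi -> 1 <= n ->
  forall j, 1 <= j <= n -> Border psi j n.
Proof.
move=> Hf; elim: n => [//|n IH] hn j hj.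
case: (ltnP j n.+1) => hj'; last first.
  have -> : j = n.+1 by lia.
  move=> k hk; by rewrite subnn.
have hn1 : 1 <= n by lia.
have HB := IH hn1.
have hBF := BF_of Hf hn1 HB.
move=> k hk.
have hjn := Lle Hf (a:=j) (b:=n) ltac:(lia) ltac:(lia).
have hnn := Lmono Hf (a:=n) (b:=n.+1) hn1 (ltnSn _).
have -> : L psi n.+1 - L psi j + k = L psi n.+1 - L psi n + (L psi n - L psi j + k) by lia.
rewrite hBF; last lia.
apply: HB => //; lia.
Qed.

Lemma BF A (psi : nat -> nat + A) n : is_function psi -> 1 <= n ->
  forall k, k < L psi n -> w_psi psi (L psi n.+1 - L psi n + k) = w_psi psi k.
Proof. move=> Hf hn; apply: BF_of => //; exact: Border_all. Qed.

Definition sig A (psi : nat -> nat + A) n :=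
  match psi n with inl m => m | inr _ => 0 end.
Definition M A (psi : nat -> nat + A) n :=
  if n is 0 then 0 else (L psi n).+1.
Definition R A (psi : nat -> nat + A) n := M psi n.+1 - M psi n.

Lemma sig_lt A (psi : nat -> nat + A) n : is_function psi -> 1 <= n ->
  sig psi n < n.
Proof.
move=> Hf hn; rewrite /sig; have := Hf n hn; case: (psi n) => //; lia.
Qed.

Lemma M_mono A (psi : nat -> nat + A) a b : is_function psi -> a < b ->
  M psi a < M psi b.
Proof.
move=> Hf hab; case: a hab => [|a] hab; case: b hab => [|b] hab //=.
have := Lmono Hf (a:=a.+1) (b:=b.+1) erefl hab; lia.
Qed.

Lemma M_mono_le A (psi : nat -> nat + A) a b : is_function psi -> a <= b ->
  M psi a <= M psi b.
Proof.
move=> Hf hab; case: (ltnP a b) => h; first by have := M_mono Hf h; lia.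
have -> : a = b by lia. by [].
Qed.

Lemma M_lt_inv A (psi : nat -> nat + A) a b : is_function psi ->
  M psi a < M psi b -> a < b.
Proof.
move=> Hf h; case: (ltnP a b) => // h'; have := M_mono_le Hf h'; lia.
Qed.

Lemma M_inj A (psi : nat -> nat + A) a b : is_function psi ->
  M psi a = M psi b -> a = b.
Proof.
move=> Hf h; case: (ltngtP a b) => // h'.
  by have := M_mono Hf h'; lia.
by have := M_mono Hf h'; lia.
Qed.

Lemma M_rec A (psi : nat -> nat + A) n : is_function psi -> 1 <= n ->
  M psi n.+1 + M psi (sig psi n) = 2 * M psi n.
Proof.
move=> Hf hn; rewrite /sig.
case e: (psi n) => [q|a].
  have hq := psi_inl Hf hn e.
  have hLq := Lmono Hf (a:=q) (b:=n) ltac:(lia) ltac:(lia).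
  have hL := L_inl Hf hn e.
  case: n hn e hq hLq hL => [//|n] hn e hq hLq hL.
  case: q e hq hLq hL => [|q] e hq hLq hL; first lia.
  rewrite /M hL. lia.
have hL := L_let Hf hn e.
case: n hn e hL => [//|n] hn e hL.
rewrite /M hL. lia.
Qed.

Lemma M1 A (psi : nat -> nat + A) : M psi 1 = 1.
Proof. by []. Qed.

Lemma R_pos A (psi : nat -> nat + A) n : is_function psi -> 0 < R psi n.
Proof. move=> Hf; rewrite /R; have := M_mono Hf (ltnSn n); lia. Qed.

Lemma R_step A (psi : nat -> nat + A) n : is_function psi -> 1 <= n ->
  R psi n = M psi n - M psi (sig psi n).
Proof. move=> Hf hn; rewrite /R; have := M_rec Hf hn; have := M_mono_le Hf (ltnW (sig_lt Hf hn)); lia. Qed.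

Lemma R_mono1 A (psi : nat -> nat + A) n : is_function psi -> 1 <= n ->
  R psi n.-1 <= R psi n.
Proof.
move=> Hf hn; rewrite (R_step Hf hn) /R.
have h1 := sig_lt Hf hn.
have := M_mono_le Hf (a:=sig psi n) (b:=n.-1) ltac:(lia).
have := M_mono_le Hf (a:=n.-1) (b:=n) ltac:(lia).
have -> : n.-1.+1 = n by lia. lia.
Qed.

Lemma R_mono A (psi : nat -> nat + A) a b : is_function psi -> a <= b ->
  R psi a <= R psi b.
Proof.
move=> Hf; elim: b => [|b IH] hab; first by have -> : a = 0 by lia.
case: (ltnP a b.+1) => h; last by have -> : a = b.+1 by lia.
have := IH ltac:(lia); have := R_mono1 Hf (n:=b.+1) erefl; simpl; lia.
Qed.

Lemma R_strict A (psi : nat -> nat + A) n : is_function psi -> 1 <= n ->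
  sig psi n < n.-1 -> R psi n.-1 < R psi n.
Proof.
move=> Hf hn hs; rewrite (R_step Hf hn) /R.
have := M_mono Hf (a:=sig psi n) (b:=n.-1) hs.
have := M_mono_le Hf (a:=n.-1) (b:=n) ltac:(lia).
have -> : n.-1.+1 = n by lia. lia.
Qed.

Lemma is_t1 A (psi : nat -> nat + A) : is_function psi -> is_t psi 1.
Proof.
move=> Hf; split => //; have := Hf 1 erefl; case: (psi 1) => //; lia.
Qed.

Lemma not_t A (psi : nat -> nat + A) n : is_function psi -> 2 <= n ->
  ~ is_t psi n -> psi n = inl n.-1.
Proof.
move=> Hf hn ht; have := Hf n ltac:(lia).
case e: (psi n) => [m|a] hm.
  have : ~ (1 <= m <= n - 2) by move=> h; apply: ht; split; [lia| by rewrite e].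
  move=> h; f_equal; lia.
by exfalso; apply: ht; split; [lia| by rewrite e].
Qed.

Lemma not_t_sig A (psi : nat -> nat + A) n : is_function psi -> 2 <= n ->
  ~ is_t psi n -> sig psi n = n.-1.
Proof. move=> Hf hn ht; by rewrite /sig (not_t Hf hn ht). Qed.

Lemma t_sig A (psi : nat -> nat + A) n : is_function psi -> is_t psi n ->
  sig psi n < n.-1 \/ n = 1.
Proof.
move=> Hf [hn ht]; rewrite /sig; move: ht; case: (psi n) => [m|a] hm; first by left; lia.
case: n hn hm => [//|[|n]] _ _; [by right | by left].
Qed.

Lemma prevt A (psi : nat -> nat + A) n : is_function psi -> 2 <= n ->
  exists m, 1 <= m < n /\ is_t psi m /\ forall k, m < k < n -> ~ is_t psi k.
Proof.
move=> Hf; elim: n => [//|n IH] hn.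
case: (classic (is_t psi n)) => ht.
  exists n; split; [lia|split => //]; lia.
have hn2 : 2 <= n.
  case: n IH hn ht => [|[|n]] //= _ _ ht; exfalso; apply: ht; exact: is_t1.
have [m [hm [htm hk]]] := IH hn2.
exists m; split; [lia|split => //].
move=> k hk'; case: (ltnP k n) => h; first by apply: hk; lia.
by have -> : k = n by lia.
Qed.

Lemma red_sig A (psi : nat -> nat + A) m n : reduced psi -> m < n -> 1 <= m ->
  is_t psi m -> is_t psi n -> (forall k, m < k < n -> ~ is_t psi k) ->
  sig psi n < m.
Proof.
move=> Hr hmn hm htm htn hk; have [_ H] := Hr m n hmn htm htn hk.
move: H; rewrite /sig; case: (psi n) => //.
Qed.

Lemma run A (psi : nat -> nat + A) T d : is_function psi -> 1 <= T ->
  (forall k, T < k <= T + d -> ~ is_t psi k) ->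
  M psi (T + d) = M psi T + d * R psi T /\ R psi (T + d) = R psi T.
Proof.
move=> Hf hT; elim: d => [|d IH] hk; first by rewrite addn0 mul0n addn0.
have [IH1 IH2] := IH (fun k hk' => hk k ltac:(lia)).
have hnt := hk (T + d.+1) ltac:(lia).
have hs := not_t_sig Hf (n:=T+d.+1) ltac:(lia) hnt.
have hR : R psi (T + d.+1) = R psi (T + d).
  rewrite (R_step Hf (n:=T+d.+1)) ?hs; last lia.
  rewrite /R. have -> : (T + d.+1).-1 = T + d by lia. by have -> : (T + d).+1 = T + d.+1 by lia.
split; last by rewrite hR IH2.
have : M psi (T + d.+1) = M psi (T + d) + R psi (T + d).
  rewrite /R; have -> : (T + d).+1 = T + d.+1 by lia.
  have := M_mono Hf (ltnSn (T + d)); have -> : (T + d).+1 = T + d.+1 by lia. lia.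
rewrite IH1 IH2 mulSn; lia.
Qed.

Lemma Zlem A (psi : nat -> nat + A) n : is_function psi -> reduced psi ->
  is_t psi n -> M psi n + 1 <= 2 * R psi n.
Proof.
move=> Hf Hr; elim/ltn_ind: n => n IH htn.
have hn : 1 <= n by case: htn.
rewrite (R_step Hf hn).
have hMn : 1 <= M psi n by case: n hn {IH htn}.
case e: (psi n) => [q|a]; last by rewrite /sig e /=; lia.
have hsq : sig psi n = q by rewrite /sig e.
have [hq|hn1] := t_sig Hf htn; last by subst n; have := Hf 1 erefl; rewrite e; lia.
have hq1 : 1 <= q by have := psi_inl Hf hn e; lia.
have [m [hm [htm hkm]]] := prevt Hf (n:=n) ltac:(lia).
have hqm : q < m by rewrite -hsq; apply: (red_sig Hr) => //; lia.
have [m' [hm' [htm' hkm']]] := prevt Hf (n:=m) ltac:(lia).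
have hsm : sig psi m < m' by apply: (red_sig Hr) => //; lia.
have Zm' := IH m' ltac:(lia) htm'.
have hR := R_mono Hf (a:=m') (b:=m.-1) ltac:(lia).
have hRm : M psi m.-1 + R psi m.-1 = M psi m.
  rewrite /R; have -> : m.-1.+1 = m by lia. have := M_mono Hf (a:=m.-1) (b:=m) ltac:(lia); lia.
have hrec := M_rec Hf (n:=m) ltac:(lia).
have h1 := M_mono_le Hf (a:=m.+1) (b:=n) ltac:(lia).
have h2 := M_mono_le Hf (a:=q) (b:=m.-1) ltac:(lia).
have h3 := M_mono Hf hsm.
rewrite hsq. lia.
Qed.

Lemma Mprev A (psi : nat -> nat + A) x : is_function psi -> 1 <= x ->
  M psi x.-1 + R psi x.-1 = M psi x.
Proof.
move=> Hf hx; rewrite /R; have -> : x.-1.+1 = x by lia.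
have := M_mono Hf (a:=x.-1) (b:=x) ltac:(lia); lia.
Qed.

Lemma Clem A (psi : nat -> nat + A) i : is_function psi -> reduced psi ->
  forall q j l, q < j -> j <= l -> l < i -> M psi j + M psi l = M psi i + M psi q ->
  exists T, 1 <= T <= j /\ is_t psi T /\ (forall k, T < k < i -> ~ is_t psi k) /\
            (T <= q \/ q = sig psi T).
Proof.
move=> Hf Hr; elim/ltn_ind: i => i IH q j l hqj hjl hli heq.
have [T [hT [htT hkT]]] := prevt Hf (n:=i) ltac:(lia).
set rho := R psi T.
have ZT := Zlem Hf Hr htT.
have hrT := M_rec Hf (n:=T) ltac:(lia).
have hRT := R_step Hf (n:=T) ltac:(lia).
have hsT := sig_lt Hf (n:=T) ltac:(lia).
have Mrun : forall x, T <= x <= i -> M psi x = M psi T + (x - T) * rho.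
  move=> x hx.
  have [h1 h2] := run Hf (T:=T) (d:=i.-1 - T) ltac:(lia) (fun k hk => hkT k ltac:(lia)).
  case: (ltnP x i) => hxi.
    have [h3 _] := run Hf (T:=T) (d:=x - T) ltac:(lia) (fun k hk => hkT k ltac:(lia)).
    have e : T + (x - T) = x by lia. by rewrite e in h3.
  have -> : x = i by lia.
  have hp := Mprev Hf (x:=i) ltac:(lia).
  have e2 : i.-1 = T + (i.-1 - T) by lia. rewrite e2 in hp.
  rewrite -hp h1 h2 -/rho.
  have -> : i - T = (i.-1 - T).+1 by lia.
  rewrite mulSn; lia.
case: (leqP T l) => hTl.
  have hMi := Mrun i ltac:(lia).
  have hMl := Mrun l ltac:(lia).
  case: (leqP T q) => hTq.
    exists T; split; [lia|split => //; split => //; by left].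
  case: (leqP T j) => hTj.
    have hMj := Mrun j ltac:(lia).
    have hMq := M_mono Hf hTq.
    have hMs := M_mono Hf hsT.
    exists T; split; [lia|split => //; split => //; right].
    apply: (M_inj Hf).
    set a := i - l in hMi. set y := l - T in hMl hMi. set z := j - T in hMj.
    have ha : i - T = y + a by rewrite /y /a; lia.
    rewrite ha in hMi.
    have e1 : M psi T + z * rho = a * rho + M psi q.
      rewrite hMj hMl hMi mulnDl in heq. lia.
    case: (ltngtP a z.+1) => hf.
      have : a * rho <= z * rho by apply: leq_mul => //; lia.
      lia.
    - have : (z.+2) * rho <= a * rho by apply: leq_mul => //; lia.
      rewrite !mulSn. lia.
    - rewrite hf mulSn in e1. lia.
  have hMj := M_mono Hf hTj.
  set a := i - l in hMi. set y := l - T in hMl hMi.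
  have ha : i - T = y + a by rewrite /y /a; lia.
  rewrite ha mulnDl in hMi.
  have e1 : M psi j = a * rho + M psi q by lia.
  have ha1 : a = 1.
    case: (ltngtP a 1) => hf //; first by (have -> : a = 0 by lia); lia.
    have : 2 * rho <= a * rho by apply: leq_mul => //; lia.
    lia.
  rewrite ha1 mul1n in e1.
  have hqs : q < sig psi T by apply: (M_lt_inv Hf); lia.
  have hsj : sig psi T <= j.
    case: (leqP (sig psi T) j) => // h.
    have := M_mono Hf h; lia.
  have [T'' [hT'' [htT'' [hkT'' _]]]] := IH T ltac:(lia) q (sig psi T) j hqs hsj hTj ltac:(lia).
  have [m [hm [htm hkm]]] := prevt Hf (n:=T) ltac:(lia).
  have hsm : sig psi T < m by apply: (red_sig Hr) => //; lia.
  by exfalso; apply: (hkT'' m) => //; lia.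
have [m [hm [htm hkm]]] := prevt Hf (n:=T) ltac:(lia).
have hsm : sig psi T < m by apply: (red_sig Hr) => //; lia.
have Zm := Zlem Hf Hr htm.
have hR := R_mono Hf (a:=m) (b:=T.-1) ltac:(lia).
have hp := Mprev Hf (x:=T) ltac:(lia).
have h1 := M_mono_le Hf (a:=j) (b:=l) hjl.
have h2 := M_mono_le Hf (a:=l) (b:=T.-1) ltac:(lia).
have h3 := M_mono_le Hf (a:=T.+1) (b:=i) ltac:(lia).
have h4 := M_mono Hf hsm.
lia.
Qed.

Lemma Dlem A (psi : nat -> nat + A) i m : is_function psi -> reduced psi ->
  is_t psi i -> 1 <= m < i -> is_t psi m -> (forall k, m < k < i -> ~ is_t psi k) ->
  forall j l, sig psi i < j -> j <= l -> l < i ->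
  M psi j + M psi l = M psi i + M psi (sig psi i) ->
  sig psi i = sig psi m /\ m <= j.
Proof.
move=> Hf Hr hti hm htm hkm j l hqj hjl hli heq.
have [T [hT [htT [hkT hor]]]] := Clem Hf Hr hqj hjl hli heq.
have eT : T = m.
  case: (ltngtP T m) => // h.
    by exfalso; apply: (hkT m) => //; lia.
  by exfalso; apply: (hkm T) => //; lia.
subst T.
have hs : sig psi i < m by apply: (red_sig Hr) => //; lia.
case: hor => h; [lia | split => //; lia].
Qed.

Definition CR A (psi : nat -> nat + A) n :=
  forall s, 0 < s -> s < L psi n.+1 - L psi n ->
  ~ (forall k, k < L psi n -> w_psi psi (s + k) = w_psi psi k).

Lemma BC A (psi : nat -> nat + A) n : is_function psi -> 1 <= n ->
  (forall j, 1 <= j < n -> CR psi j) ->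
  forall b, b < L psi n -> (forall k, k < b -> w_psi psi (L psi n - b + k) = w_psi psi k) ->
  exists j, 1 <= j < n /\ L psi j = b.
Proof.
move=> Hf; elim: n => [//|n IH] hn HCR b hb Hb.
case: n IH hn HCR hb Hb => [|n] IH hn HCR hb Hb; first by rewrite L1 in hb.
have hn1 : 1 <= n.+1 by [].
have hLn := Lmono Hf (a:=n.+1) (b:=n.+2) erefl (ltnSn _).
case: (ltngtP b (L psi n.+1)) => hbn.
- have Hb' : forall k, k < b -> w_psi psi (L psi n.+1 - b + k) = w_psi psi k.
    move=> k hk.
    have := BF Hf hn1 (k:=L psi n.+1 - b + k) ltac:(lia).
    have -> : L psi n.+2 - L psi n.+1 + (L psi n.+1 - b + k) = L psi n.+2 - b + k by lia.
    move=> <-; by rewrite Hb.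
  have [j [hj hLj]] := IH hn1 (fun j hj => HCR j ltac:(lia)) b hbn Hb'.
  exists j; split => //; lia.
- exfalso; apply: (HCR n.+1 ltac:(lia) (L psi n.+2 - b)); try lia.
  move=> k hk; apply: Hb; lia.
- exists n.+1; split => //; lia.
Qed.

Lemma Wrun A (psi : nat -> nat + A) m n : is_function psi -> 1 <= m ->
  (forall k, m < k < n -> ~ is_t psi k) ->
  forall x, m <= x < n -> w_psi psi (L psi x) = w_psi psi (L psi m).
Proof.
move=> Hf hm hk; elim=> [|x IH] hx; first lia.
case: (ltnP m x.+1) => h; last by have -> : x.+1 = m by lia.
have hnt := hk x.+1 ltac:(lia).
have e := not_t Hf (n:=x.+1) ltac:(lia) hnt.
have hL := Lmono Hf (a:=x) (b:=x.+1) ltac:(lia) (ltnSn _).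
have := W_copy Hf (n:=x.+1) ltac:(lia) e (e:=0) ltac:(simpl; lia).
rewrite !addn0 /= => ->. apply: IH; lia.
Qed.

Lemma M_pos A (psi : nat -> nat + A) x : 1 <= x -> M psi x = L psi x + 1.
Proof. by case: x => [//|x] _ /=; rewrite addn1. Qed.

Lemma Dsym A (psi : nat -> nat + A) i m : is_function psi -> reduced psi ->
  is_t psi i -> 1 <= m < i -> is_t psi m -> (forall k, m < k < i -> ~ is_t psi k) ->
  forall j l, sig psi i < j -> sig psi i < l -> j < i -> l < i ->
  M psi j + M psi l = M psi i + M psi (sig psi i) ->
  sig psi i = sig psi m /\ m <= j /\ m <= l.
Proof.
move=> Hf Hr hti hm htm hkm j l h1 h2 h3 h4 heq.
case: (leqP j l) => h.
  have [a b] := Dlem Hf Hr hti hm htm hkm h1 h h4 heq; split => //; lia.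
have heq' : M psi l + M psi j = M psi i + M psi (sig psi i) by lia.
have [a b] := Dlem Hf Hr hti hm htm hkm h2 (ltnW h) h3 heq'; split => //; lia.
Qed.

Lemma CR_all A (psi : nat -> nat + A) n : is_function psi -> reduced psi ->
  1 <= n -> CR psi n.
Proof.
move=> Hf Hr; elim/ltn_ind: n => n IH hn s hs0 hs H.
have HCR : forall j, 1 <= j < n -> CR psi j by move=> j hj; apply: IH; lia.
have HBC := BC Hf hn HCR.
have hbord : forall b, b = L psi n - s -> b < L psi n ->
    exists j, 1 <= j < n /\ L psi j = b.
  move=> b eb hb; apply: HBC => // k hk.
  have -> : L psi n - b + k = s + k by lia.
  apply: H; lia.
case e: (psi n) => [q|a].
  have hq := psi_inl Hf hn e.
  have hLq := Lmono Hf (a:=q) (b:=n) ltac:(lia) ltac:(lia).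
  have hL := L_inl Hf hn e.
  case: (classic (is_t psi n)) => htn; last first.
    have e' := not_t Hf (n:=n) ltac:(lia) htn.
    rewrite e in e'; case: e' => eq; subst q.
    apply: (HCR n.-1 ltac:(lia) s hs0).
      have -> : n.-1.+1 = n by lia. lia.
    move=> k hk; apply: H.
    have := Lmono Hf (a:=n.-1) (b:=n) ltac:(lia) ltac:(lia); lia.
  have [j [hj hLj]] := hbord (L psi n - s) erefl ltac:(lia).
  have hqj : q < j.
    case: (ltnP q j) => // h; have := Lle Hf (a:=j) (b:=q) ltac:(lia) h; lia.
  have Hc : forall e0, e0 < L psi n - L psi j ->
      w_psi psi (L psi j + e0) = w_psi psi (L psi q + e0).
    move=> e0 he0.
    rewrite -(W_copy Hf hn e); last lia.
    have -> : L psi n + e0 = s + (L psi j + e0) by lia.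
    rewrite H //; lia.
  have Hb2 : forall k, k < L psi n - L psi j + L psi q -> w_psi psi (L psi n - (L psi n - L psi j + L psi q) + k) = w_psi psi k.
    move=> k hk.
    have -> : L psi n - (L psi n - L psi j + L psi q) + k = L psi j - L psi q + k by lia.
    case: (ltnP k (L psi q)) => hk'.
      apply: (Border_all Hf (n:=j)) => //; lia.
    have -> : L psi j - L psi q + k = L psi j + (k - L psi q) by lia.
    rewrite Hc; last lia.
    by have -> : L psi q + (k - L psi q) = k by lia.
  have [l [hl hLl]] := HBC (L psi n - L psi j + L psi q) ltac:(lia) Hb2.
  have hql : q < l.
    case: (ltnP q l) => // h; have := Lle Hf (a:=l) (b:=q) ltac:(lia) h; lia.
  have hMeq : M psi j + M psi l = M psi n + M psi q.
    rewrite !M_pos; lia.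
  have [m [hm [htm hkm]]] := prevt Hf (n:=n) ltac:(lia).
  have hsn : sig psi n = q by rewrite /sig e.
  have [hsm _] := Dsym Hf Hr htn (m:=m) ltac:(lia) htm hkm (j:=j) (l:=l) ltac:(lia) ltac:(lia) ltac:(lia) ltac:(lia) ltac:(rewrite hsn; lia).
  have [hne _] := Hr m n ltac:(lia) htm htn hkm.
  apply: hne; rewrite e; move: hsm; rewrite hsn /sig.
  have := Hf m ltac:(lia).
  case: (psi m) => [q'|b'] //; [move=> _ -> // | lia].
have hL := L_let Hf hn e.
have [hWa hWl] := W_let Hf hn e.
have htn : is_t psi n by split => //; rewrite e.
have [j [hj hLj]] := hbord (L psi n - s) erefl ltac:(lia).
have hcol : w_psi psi (L psi j) = Some a.
  rewrite -hWa -(H (L psi j)); last lia.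
  f_equal; lia.
have Hb2 : forall k, k < L psi n - L psi j - 1 ->
    w_psi psi (L psi n - (L psi n - L psi j - 1) + k) = w_psi psi k.
  move=> k hk.
  rewrite -(H (L psi n - (L psi n - L psi j - 1) + k)); last lia.
  rewrite -(hWl k); last lia.
  f_equal; lia.
have [l [hl hLl]] := HBC (L psi n - L psi j - 1) ltac:(lia) Hb2.
have hsn : sig psi n = 0 by rewrite /sig e.
have [m [hm [htm hkm]]] := prevt Hf (n:=n) ltac:(lia).
have [hsm [hmj _]] := Dsym Hf Hr htn (m:=m) ltac:(lia) htm hkm (j:=j) (l:=l) ltac:(lia) ltac:(lia) ltac:(lia) ltac:(lia) ltac:(rewrite hsn /= !M_pos; lia).
have hWj := Wrun Hf (m:=m) (n:=n) ltac:(lia) hkm (x:=j) ltac:(lia).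
have [hne _] := Hr m n ltac:(lia) htm htn hkm.
apply: hne; rewrite e.
move: hsm hWj; rewrite hsn /sig.
have := Hf m ltac:(lia).
case em: (psi m) => [q'|b'] //; first lia.
move=> _ _.
have [hWb _] := W_let Hf (n:=m) ltac:(lia) em.
by rewrite hWb hcol => -[->].
Qed.

Lemma R_L A (psi : nat -> nat + A) n : 1 <= n -> R psi n = L psi n.+1 - L psi n.
Proof. move=> hn; rewrite /R !M_pos //; lia. Qed.

Lemma unbounded A (psi : nat -> nat + A) : is_function psi ->
  ~ (exists N, forall n, N <= n -> psi n = inl n.-1) ->
  forall B, exists n, 1 <= n /\ B <= R psi n.
Proof.
move=> Hf Hno; elim=> [|B [n [hn hB]]]; first by exists 1.
have : ~ (forall n', n.+2 <= n' -> psi n' = inl n'.-1) by move=> h; apply: Hno; exists n.+2.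
move=> /not_all_ex_not [n' hn'].
have h1 : n.+2 <= n' by apply: NNPP => h; apply: hn' => h'; exfalso; exact: h h'.
have h2 : psi n' <> inl n'.-1 by move=> h; apply: hn' => _.
have htn : is_t psi n' by apply: NNPP => h; apply: h2; apply: (not_t Hf) => //; lia.
have hs : sig psi n' < n'.-1 by case: (t_sig Hf htn) => //; lia.
have := R_strict Hf (n:=n') ltac:(lia) hs.
have := R_mono Hf (a:=n) (b:=n'.-1) ltac:(lia).
move=> ha hb; exists n'; split; lia.
Qed.

Theorem corollary4p13 (A : Type) (psi : nat -> nat + A) :
  is_function psi -> reduced psi ->
  (periodic (w_psi psi) <->
   exists N, forall n, N <= n -> psi n = inl n.-1).
Proof.
move=> Hf Hr; split.
  move=> [p [hp Hper]]; apply: NNPP => Hno.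
  have [n [hn hR]] := unbounded Hf Hno p.+1.
  rewrite (R_L _ hn) in hR.
  apply: (CR_all Hf Hr hn (s:=p) hp); first lia.
  move=> k _; by rewrite addnC Hper.
move=> [N HN].
have [N' [hN1 hN2]] : exists N', N <= N' /\ 2 <= N' by exists (maxn N 2); lia.
set p := L psi N'.+1 - L psi N'.
have hconst : forall d, L psi (N' + d).+1 - L psi (N' + d) = p.
  elim=> [|d IH]; first by rewrite addn0.
  have e := HN (N' + d).+1 ltac:(lia).
  rewrite addnS (L_inl Hf (n:=(N' + d).+1) ltac:(lia) e) /= -IH.
  have := Lmono Hf (a:=N'+d) (b:=(N'+d).+1) ltac:(lia) (ltnSn _). lia.
have hp : 0 < p by rewrite /p; have := Lmono Hf (a:=N') (b:=N'.+1) ltac:(lia) (ltnSn _); lia.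
exists p; split => // k.
set n := N' + k.+2.
have hk : k < L psi n by have := Lge Hf (n:=n) ltac:(rewrite /n; lia); rewrite /n; lia.
have := BF Hf (n:=n) ltac:(rewrite /n; lia) hk.
by rewrite hconst addnC.
Qed.
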